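(* Let $D\ge 1$. If a complex number $\alpha$ can be computed by a root computation tree of degree $D$, then the field extension degree $[\mathbf{Q}(\alpha):\mathbf{Q}]$ is $D$-smooth, i.e., it has no prime factor greater than $D$. In particular, if $\alpha$ can be computed by a quadratic computation tree, then $[\mathbf{Q}(\alpha):\mathbf{Q}]$ is a power of two.
   Context: An algebraic computation tree is a rooted tree whose computation nodes compute a value as the sum, difference, product or quotient of integer constants and values computed at ancestor nodes, and whose decision nodes test whether a computed value is greater than zero and branch. A root computation tree additionally allows computing a complex root of a univariate polynomial whose coefficients are integers or previously computed values, and complex conjugation; its degree is the maximum degree of any polynomial used. A quadratic computation tree is an algebraic computation tree additionally allowing square roots and complex conjugation. A value is computed by a tree if it is computed at some node. *)

(* Defs.v *)
(* Complex numbers are modelled by algC (algebraic complex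
   numbers): every value computed by these trees is algebraic. *)
From HB Require Import structures.
From mathcomp Require Import all_boot all_order all_algebra all_field.
Set Implicit Arguments. Unset Strict Implicit. Unset Printing Implicit Defensive.
Import Order.TTheory GRing.Theory Num.Theory.
Local Open Scope ring_scope.

(* An operand: an integer constant, or the value computed at the i-th
   ancestor computation node (counted from the root, starting at 0). *)
Inductive operand :=
| OConst of int
| OVal of nat.

Inductive instr :=
| IAdd of operand & operand
| ISub of operand & operand
| IMul of operand & operand
| IDiv of operand & operand
| IRoot of seq operand      (* a root of sum_i c_i X^i, coefficients c_0..c_n *)
| IConj of operand
| ISqrt of operand.

(* Computation trees: leaves, computation nodes (one child),
   decision nodes (test "value of ancestor i > 0", two children). *)
Inductive ctree :=
| Leaf
| Comp of instr & ctree
| Dec of nat & ctree & ctree.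

Definition lookup (env : seq algC) (i : nat) : option algC :=
  if (i < size env)%N then Some (nth 0 env i) else None.

Definition eval_op (env : seq algC) (o : operand) : option algC :=
  match o with
  | OConst z => Some (z%:~R)
  | OVal i => lookup env i
  end.

(* Division by zero, roots of the zero polynomial, and references to
   non-existing ancestors yield nothing.  Root and square-root nodes may
   return any root. *)
Definition step (env : seq algC) (op : instr) (v : algC) : Prop :=
  match op with
  | IAdd a b => exists x y, eval_op env a = Some x /\ eval_op env b = Some y /\ v = x + y
  | ISub a b => exists x y, eval_op env a = Some x /\ eval_op env b = Some y /\ v = x - y
  | IMul a b => exists x y, eval_op env a = Some x /\ eval_op env b = Some y /\ v = x * y
  | IDiv a b => exists x y, eval_op env a = Some x /\ eval_op env b = Some y /\
                            y != 0 /\ v = x / y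
  | IRoot cs => exists c : seq algC, map (eval_op env) cs = map Some c /\
                  Poly c != 0 /\ root (Poly c) v
  | IConj a => exists x, eval_op env a = Some x /\ v = x^*
  | ISqrt a => exists x, eval_op env a = Some x /\ v ^+ 2 = x
  end.

(* [computes_from env t x]: starting with ancestor values [env], the
   (sub)tree [t] computes [x] at some node reached by the computation. *)
Fixpoint computes_from (env : seq algC) (t : ctree) (x : algC) : Prop :=
  match t with
  | Leaf => False
  | Comp op t' => exists v, step env op v /\ (x = v \/ computes_from (rcons env v) t' x)
  | Dec i t1 t2 => exists v, lookup env i = Some v /\
                    (if 0 < v then computes_from env t1 x else computes_from env t2 x)
  end.

Definition computes (t : ctree) (x : algC) : Prop := computes_from [::] t x.

(* Root computation tree of degree (at most) D: arithmetic, conjugation and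
   roots of polynomials of degree <= D (at most D+1 coefficients). *)
Fixpoint root_tree (D : nat) (t : ctree) : bool :=
  match t with
  | Leaf => true
  | Comp (ISqrt _) _ => false
  | Comp (IRoot cs) t' => (size cs <= D.+1)%N && root_tree D t'
  | Comp _ t' => root_tree D t'
  | Dec _ t1 t2 => root_tree D t1 && root_tree D t2
  end.

Fixpoint quad_tree (t : ctree) : bool :=
  match t with
  | Leaf => true
  | Comp (IRoot _) _ => false
  | Comp _ t' => quad_tree t'
  | Dec _ t1 t2 => quad_tree t1 && quad_tree t2
  end.

Definition degQ (a : algC) : nat := (size (minCpoly a)).-1.

(* Main.v *)
Require Import Defs.
From mathcomp Require Import all_boot all_order all_algebra all_field.
From mathcomp Require Import ring.
Import GRing.Theory Num.Theory.
Local Open Scope ring_scope.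
Set Implicit Arguments. Unset Strict Implicit.

Definition allowed (B : nat) (op : instr) : bool :=
  match op with IRoot cs => (size cs <= B.+1)%N | ISqrt _ => (2 <= B)%N | _ => true end.

Fixpoint tok B t := match t with
  | Leaf => true
  | Comp op t' => allowed B op && tok B t'
  | Dec _ t1 t2 => tok B t1 && tok B t2 end.

Inductive run (B : nat) : seq algC -> Prop :=
| run0 : run B [::]
| runS env op v : run B env -> allowed B op -> step env op v -> run B (rcons env v).

Lemma root_tok D t : root_tree D t -> tok D t.
Proof.
elim: t => //= [op t IH | i t1 IH1 t2 IH2].
  case: op => [???|???|???|???|cs|?|?] /=; try (by apply: IH).
  by case/andP=> -> /IH.
  by [].
by case/andP=> /IH1 -> /IH2.
Qed.

Lemma quad_tok t : quad_tree t -> tok 2 t.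
Proof.
elim: t => //= [op t IH | i t1 IH1 t2 IH2].
  by case: op => //= *; apply: IH.
by case/andP=> /IH1 -> /IH2.
Qed.

Lemma run_tree B t : forall env a, tok B t -> run B env -> computes_from env t a ->
  exists env', run B env' /\ a \in env'.
Proof.
elim: t => [|op t IH|i t1 IH1 t2 IH2] env a //=.
  move=> /andP[hop ht] hr [v [hs [->|hc]]].
    by exists (rcons env v); split; [apply: runS hs | rewrite mem_rcons mem_head].
  exact: (IH _ _ ht (@runS B _ _ _ hr hop hs) hc).
move=> /andP[h1 h2] hr [v [_]]; case: ifP => _.
  exact: IH1. exact: IH2.
Qed.

Section NF.
Variables (Qs : fieldExtType rat) (QsC : {rmorphism Qs -> algC}).

Definition inF (E : {vspace Qs}) x := exists2 y, y \in E & QsC y = x.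

Lemma inF_seq (E : {vspace Qs}) (c : seq algC) : (forall x, x \in c -> inF E x) ->
  exists2 d : seq Qs, all (fun y => y \in E) d & map QsC d = c.
Proof.
elim: c => [|x c IH] H; first by exists [::].
have [y yE <-] := H x (mem_head _ _).
have [d dE <-] := IH (fun z zc => H z (@mem_behead _ (x :: c) _ zc)).
by exists (y :: d); rewrite //= yE.
Qed.

Lemma deg_bound (E : {subfield Qs}) (c : seq algC) (B : nat) (y : Qs) :
  (forall x, x \in c -> inF E x) -> Poly c != 0 -> root (Poly c) (QsC y) ->
  (size c <= B.+1)%N -> (adjoin_degree E y <= B)%N.
Proof.
move=> /inF_seq [d dE <-] nz r sz.
have mq : map_poly QsC (Poly d) = Poly (map QsC d) by rewrite map_Poly.
have qnz : Poly d != 0.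
  by apply: contraNneq nz => h; rewrite -mq h map_poly0.
have qr : root (Poly d) y.
  by move: r; rewrite -mq /root horner_map fmorph_eq0.
have qE : Poly d \is a polyOver E.
  apply/polyOverP => i; rewrite coef_Poly.
  have [lt|ge] := ltnP i (size d); first exact: (allP dE _ (mem_nth 0 lt)).
  by rewrite nth_default // rpred0.
have := dvdp_leq qnz (minPoly_dvdp qE qr).
rewrite size_minPoly => h.
rewrite -ltnS (leq_trans h) // (leq_trans (size_Poly _)) //.
by move: sz; rewrite size_map.
Qed.

End NF.

Section NF2.
Variables (Qs : fieldExtType rat) (QsC : {rmorphism Qs -> algC}).
Local Notation inF := (@inF Qs QsC).

Definition good (E : {vspace Qs}) B w := exists c : seq algC,
  [/\ forall x, x \in c -> inF E x, Poly c != 0, root (Poly c) w & (size c <= B.+1)%N].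

Lemma goodS (E E' : {vspace Qs}) B w : (E <= E')%VS -> good E B w -> good E' B w.
Proof.
move=> /subvP sEE' [c [h1 h2 h3 h4]]; exists c; split=> // x /h1 [y yE <-].
by exists y => //; apply: sEE'.
Qed.

Lemma inF0 (E : {subfield Qs}) (z : int) : inF E z%:~R.
Proof. by exists z%:~R; rewrite ?rpred_int ?rmorph_int. Qed.

Lemma inFD (E : {subfield Qs}) x y : inF E x -> inF E y -> inF E (x + y).
Proof. by move=> [a aE <-] [b bE <-]; exists (a + b); rewrite ?rpredD ?rmorphD. Qed.
Lemma inFB (E : {subfield Qs}) x y : inF E x -> inF E y -> inF E (x - y).
Proof. by move=> [a aE <-] [b bE <-]; exists (a - b); rewrite ?rpredB ?rmorphB. Qed.
Lemma inFM (E : {subfield Qs}) x y : inF E x -> inF E y -> inF E (x * y).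
Proof. by move=> [a aE <-] [b bE <-]; exists (a * b); rewrite ?rpredM ?rmorphM. Qed.
Lemma inFV (E : {subfield Qs}) x y : inF E x -> inF E y -> inF E (x / y).
Proof. by move=> [a aE <-] [b bE <-]; exists (a / b); rewrite ?rpred_div ?fmorph_div. Qed.

Lemma good_in (E : {subfield Qs}) B w : (1 <= B)%N -> inF E w -> good E B w.
Proof.
move=> B1 hw; exists [:: - w; 1]; split => //.
- move=> x; rewrite !inE => /orP[/eqP->|/eqP->].
    by rewrite -sub0r; apply: inFB => //; apply: (inF0 E 0).
  exact: (inF0 E 1).
- apply/eqP => h; have := congr1 (fun p : {poly algC} => p`_1) h.
  by rewrite coef_Poly coef0 /= => /eqP; rewrite oner_eq0.
- by rewrite /root horner_Poly /= mul0r add0r mul1r addrN.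
Qed.

Lemma good_poly (E : {subfield Qs}) B y (c : seq algC) :
  (forall x, x \in c -> inF E x) -> Poly c != 0 -> root (Poly c) (QsC y) ->
  (size c <= B.+1)%N -> (adjoin_degree E y <= B)%N.
Proof. exact: (@deg_bound Qs QsC). Qed.


Lemma good_sq (E : {subfield Qs}) B x w :
  (2 <= B)%N -> inF E x -> w ^+ 2 = x -> good E B w.
Proof.
move=> B2 hx hw; exists [:: - x; 0; 1]; split => //.
- move=> z; rewrite !inE => /orP[/eqP->|/orP[/eqP->|/eqP->]].
  + by rewrite -sub0r; apply: inFB => //; apply: (inF0 E 0).
  + exact: (inF0 E 0).
  + exact: (inF0 E 1).
- apply/eqP => h; have := congr1 (fun p : {poly algC} => p`_2) h.
  by rewrite coef_Poly coef0 /= => /eqP; rewrite oner_eq0.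
- rewrite /root horner_Poly /= -hw; apply/eqP; ring.
Qed.

Lemma eval_inF (E : {subfield Qs}) env o x :
  (forall z, z \in env -> inF E z /\ inF E z^*) -> eval_op env o = Some x ->
  inF E x /\ inF E x^*.
Proof.
move=> H; case: o => [z|i] /=.
  by move=> [<-]; rewrite rmorph_int; split; apply: inF0.
rewrite /lookup; case: ifP => // lt [<-]; apply: H; exact: mem_nth.
Qed.

Lemma map_some (T : Type) (f : T -> option algC) cs c x :
  map f cs = map Some c -> x \in c -> exists o, f o = Some x.
Proof.
elim: cs c => [|o cs IH] [|y c] //= [e1 e2]; rewrite inE => /orP[/eqP->|xc].
  by exists o.
exact: IH e2 xc.
Qed.

Lemma step_good (E : {subfield Qs}) B env op v :
  (1 <= B)%N -> (forall z, z \in env -> inF E z /\ inF E z^*) ->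
  allowed B op -> step env op v -> good E B v /\ good E B v^*.
Proof.
move=> B1 H; case: op => [a b|a b|a b|a b|cs|a|a] /= hal.
- move=> [x [y [/(eval_inF H) [hx hx'] [/(eval_inF H) [hy hy'] ->]]]].
  by split; apply: good_in => //; rewrite ?rmorphD; apply: inFD.
- move=> [x [y [/(eval_inF H) [hx hx'] [/(eval_inF H) [hy hy'] ->]]]].
  by split; apply: good_in => //; rewrite ?rmorphB; apply: inFB.
- move=> [x [y [/(eval_inF H) [hx hx'] [/(eval_inF H) [hy hy'] ->]]]].
  by split; apply: good_in => //; rewrite ?rmorphM; apply: inFM.
- move=> [x [y [/(eval_inF H) [hx hx'] [/(eval_inF H) [hy hy'] [_ ->]]]]].
  by split; apply: good_in => //; rewrite ?fmorph_div; apply: inFV.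
- move=> [c [hm [nz r]]].
  have hc : forall x, x \in c -> inF E x /\ inF E x^*.
    move=> x xc; have [o ho] := map_some hm xc.
    exact: eval_inF H ho.
  have sz : (size c <= B.+1)%N by rewrite -(size_map Some) -hm size_map.
  split; first by exists c; split => // x /hc [].
  exists (map Num.conj_op c); split.
  + by move=> x /mapP [z /hc [_ ?] ->].
  + by rewrite -map_Poly map_poly_eq0.
  + by rewrite -map_Poly fmorph_root.
  + by rewrite size_map.
- move=> [x [/(eval_inF H) [hx hx'] ->]].
  by split; apply: good_in => //; rewrite ?conjCK.
- move=> [x [/(eval_inF H) [hx hx'] hv]].
  split; first exact: good_sq hx hv.
  by apply: good_sq hx' _ => //; rewrite -rmorphXn hv.
Qed.

End NF2.

Definition smooth B n := forall p, prime p -> (p %| n)%N -> (p <= B)%N.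

Lemma smooth_mul B k m : smooth B m -> (0 < k <= B)%N -> smooth B (k * m).
Proof.
move=> hm /andP[k0 kB] p pp; rewrite Euclid_dvdM // => /orP[/(dvdn_leq k0) h|].
  exact: leq_trans h kB.
exact: hm.
Qed.

Section NF3.
Variables (Qs : fieldExtType rat) (QsC : {rmorphism Qs -> algC}).
Local Notation inF := (@inF Qs QsC).

Lemma run_field B env : (1 <= B)%N -> run B env ->
  (forall x, x \in env -> inF fullv x /\ inF fullv x^*) ->
  exists E : {subfield Qs}, smooth B (\dim E) /\
    forall z, z \in env -> inF E z /\ inF E z^*.
Proof.
move=> B1; elim => {env} [|env op v hr IH hop hs] Hyp.
  exists 1%AS; split => // p pp; rewrite dimv1 dvdn1 => /eqP p1.
  by move: pp; rewrite p1.
have [E [sE HE]] : exists E : {subfield Qs}, smooth B (\dim E) /\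
    forall z, z \in env -> inF E z /\ inF E z^*.
  by apply: IH => x xe; apply: Hyp; rewrite mem_rcons inE xe orbT.
have hv : v \in rcons env v by rewrite mem_rcons mem_head.
have [[y _ yv] [yc _ ycv]] := Hyp v hv.
have [g1 g2] := step_good B1 HE hop hs.
pose E1 := <<E; y>>%AS; pose E2 := <<E1; yc>>%AS.
have sE1 : (E <= E1)%VS by apply: subv_adjoin.
have sE2 : (E1 <= E2)%VS by apply: subv_adjoin.
have d1 : (adjoin_degree E y <= B)%N.
  have [c [h1 h2 h3 h4]] := g1; apply: (deg_bound h1 h2) => //; by rewrite yv.
have d2 : (adjoin_degree E1 yc <= B)%N.
  have [c [h1 h2 h3 h4]] := goodS sE1 g2; apply: (deg_bound h1 h2) => //; by rewrite ycv.
exists E2; split.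
  have -> : \dim E2 = (adjoin_degree E1 yc * (adjoin_degree E y * \dim E))%N.
    by rewrite /E2 dim_Fadjoin /E1 dim_Fadjoin.
  apply: smooth_mul; last by rewrite d2 andbT /adjoin_degree.
  apply: smooth_mul => //; by rewrite d1 andbT /adjoin_degree.
have sEE2 := subv_trans sE1 sE2.
move=> z; rewrite mem_rcons inE => /orP[/eqP->|ze].
  split; [exists y => //; apply: (subvP sE2); exact: memv_adjoin
         | exists yc => //; exact: memv_adjoin].
have [[a aE <-] [b bE hb]] := HE z ze.
by split; [exists a | exists b] => //; apply: (subvP sEE2).
Qed.

End NF3.

Section NF4.
Variables (Qs : fieldExtType rat) (QsC : {rmorphism Qs -> algC}).

Lemma mapQ (q : {poly rat}) :
  map_poly QsC (map_poly (in_alg Qs) q) = map_poly ratr q.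
Proof.
rewrite -map_poly_comp; apply: eq_map_poly => a /=.
by rewrite alg_num_field fmorph_rat.
Qed.

Lemma degQ_adj (y : Qs) : degQ (QsC y) = adjoin_degree (1%AS : {subfield Qs}) y.
Proof.
rewrite /degQ; have [p [Dp mp] dvp] := minCpolyP (QsC y).
have /polyOver1P [q Dq] := minPolyOver (1%AS : {subfield Qs}) y.
have mnz : minPoly (1%AS : {subfield Qs}) y != 0 by rewrite monic_neq0 ?monic_minPoly.
have le1 : (size (minPoly (1%AS : {subfield Qs}) y) <= size p)%N.
  pose r := map_poly (in_alg Qs) p.
  have rnz : r != 0 by rewrite map_poly_eq0 monic_neq0.
  have rr : root r y.
    have : root (map_poly QsC r) (QsC y) by rewrite mapQ -Dp root_minCpoly.
    by rewrite fmorph_root.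
  have rO : r \is a polyOver (1%AS : {subfield Qs}) by apply/polyOver1P; exists p.
  have := dvdp_leq rnz (minPoly_dvdp rO rr).
  by rewrite size_map_poly.
have le2 : (size p <= size (minPoly (1%AS : {subfield Qs}) y))%N.
  have qnz : q != 0 by apply: contraNneq mnz => q0; rewrite Dq q0 map_poly0.
  have : root (map_poly ratr q) (QsC y).
    by rewrite -mapQ -Dq fmorph_root root_minPoly.
  rewrite dvp => /(dvdp_leq qnz) h.
  by rewrite Dq size_map_poly.
rewrite Dp size_map_poly.
have e : size p = size (minPoly (1%AS : {subfield Qs}) y) by apply/anti_leq; rewrite le1 le2.
by rewrite e size_minPoly.
Qed.

End NF4.

Lemma main_smooth B t a : (1 <= B)%N -> tok B t -> computes t a -> smooth B (degQ a).
Proof.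
move=> B1 ht hc.
have [env [hr ha]] := run_tree ht (run0 B) hc.
have [Qs [QsC [s1 hs1 _]]] := num_field_exists (env ++ map Num.conj_op env).
have Hyp : forall x, x \in env -> inF QsC fullv x /\ inF QsC fullv x^*.
  move=> x xe; split.
    have : x \in env ++ map Num.conj_op env by rewrite mem_cat xe.
    by rewrite -hs1 => /mapP [y _ ->]; exists y => //; apply: memvf.
  have : x^* \in env ++ map Num.conj_op env by rewrite mem_cat map_f ?orbT.
  by rewrite -hs1 => /mapP [y _ ->]; exists y => //; apply: memvf.
have [E [sE HE]] := run_field B1 hr Hyp.
have [[y yE <-] _] := HE a ha.
rewrite degQ_adj => p pp hp; apply: sE => //; apply: dvdn_trans hp _.
have := field_dimS (introT idP (eq_ind_r is_true yE (sub_adjoin1v y E))).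
by rewrite dim_Fadjoin dimv1 muln1.
Qed.

Theorem lemma5 :
  (forall (D : nat) (t : ctree) (a : algC),
      (1 <= D)%N -> root_tree D t -> computes t a ->
      forall p : nat, prime p -> (p %| degQ a)%N -> (p <= D)%N)
  /\
  (forall (t : ctree) (a : algC),
      quad_tree t -> computes t a -> exists k : nat, degQ a = (2 ^ k)%N).
Proof.
split.
  by move=> D t a D1 rt hc; apply: main_smooth D1 (root_tok rt) hc.
move=> t a qt hc; have sm := main_smooth (isT : (1 <= 2)%N) (quad_tok qt) hc.
have d0 : (0 < degQ a)%N by rewrite /degQ -ltnS prednK ?size_minCpoly // ltnW ?size_minCpoly.
exists (logn 2 (degQ a)); rewrite -p_part; apply/esym/part_pnat_id.
apply/pnatP => // p pp pd; have h := sm p pp pd.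
by rewrite inE; apply/eqP/anti_leq; rewrite h prime_gt1.
Qed.
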